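(* Let $(Y,\mathfrak{T},\mathcal{P})$ be a primal fuzzy topological space. Then the family $\mathcal{B}_{\mathcal{P}}=\{\mu-\bar{\lambda}:\ \mu\in\mathfrak{T},\ \lambda\in\mathbb{I}^Y,\ \lambda\notin\mathcal{P}\}$ is a fuzzy base for the primal fuzzy topology $\mathfrak{T}^\diamond$; that is, $\mathcal{B}_{\mathcal{P}}\subseteq\mathfrak{T}^\diamond$, and for every fuzzy point $y_t$ and every $\eta\in\mathfrak{T}^\diamond$ with $y_t\prec\eta$ there exists $\beta\in\mathcal{B}_{\mathcal{P}}$ with $y_t\prec\beta\subseteq\eta$.
   Context: Let $Y$ be a nonempty set and $\mathbb{I}=[0,1]$. A fuzzy set in $Y$ is a map $Y\to\mathbb{I}$; $\mathbb{I}^Y$ is the set of all fuzzy sets; $0_Y,1_Y$ are the constant maps with values $0,1$; $\mu\subseteq\nu$ means $\mu(y)\le\nu(y)$ for all $y$; unions/intersections are pointwise sup/inf; $\bar\mu=1_Y-\mu$. For $\mu,\nu\in\mathbb{I}^Y$, $(\mu\oplus\nu)(y)=\min(\mu(y)+\nu(y),1)$ and $(\mu-\nu)(y)=\max(\mu(y)-\nu(y),0)$. A fuzzy point $y_t$ ($y\in Y$, $t\in(0,1]$) is the fuzzy set with value $t$ at $y$ and $0$ elsewhere; $y_t\in\mu$ means $t\le\mu(y)$. We write $y_t\prec\mu$ if $t+\mu(y)>1$. A set $F$ of fuzzy points is identified with the fuzzy set $y\mapsto\sup\{t: y_t\in F\}$ (with $\sup\emptyset=0$). A fuzzy topology on $Y$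 is a family $\mathfrak{T}\subseteq\mathbb{I}^Y$ containing $0_Y,1_Y$ and closed under finite intersections and arbitrary unions. For a fuzzy point $y_t$, $\mathcal{Q}(y_t)=\{\mu\in\mathfrak{T}: y_t\prec\mu\}$. A fuzzy primal on $Y$ is a family $\mathcal{P}\subseteq\mathbb{I}^Y$ such that: (i) $1_Y\notin\mathcal{P}$; (ii) if $\mu\in\mathcal{P}$ and $\nu\subseteq\mu$ then $\nu\in\mathcal{P}$; (iii) if $\mu\cap\nu\in\mathcal{P}$ then $\mu\in\mathcal{P}$ or $\nu\in\mathcal{P}$. A primal fuzzy topological space is a triple $(Y,\mathfrak{T},\mathcal{P})$ with $\mathfrak{T}$ a fuzzy topology and $\mathcal{P}$ a fuzzy primal on $Y$. For $\lambda\in\mathbb{I}^Y$, $\lambda^\diamond$ is the set of fuzzy points $y_t$ such that $\bar{\lambda}\oplus\bar{\mu}\in\mathcal{P}$ for every $\mu\in\mathcal{Q}(y_t)$, and $Cl^\diamond(\lambda)=\lambda\cup\lambda^\diamond$. The primal fuzzy topology is $\mathfrak{T}^\diamond=\{\mu\in\mathbb{I}^Y: Cl^\diamond(\bar{\mu})=\bar{\mu}\}$ (a fuzzy topology on $Y$). *)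

(* Defs.v *)
From Stdlib Require Import Reals.
Open Scope R_scope.

Definition fset (Y : Type) := Y -> R.

Definition is_fuzzy {Y : Type} (mu : fset Y) : Prop :=
  forall y, 0 <= mu y <= 1.

Definition fconst {Y : Type} (c : R) : fset Y := fun _ => c.
Definition fsub {Y : Type} (mu nu : fset Y) : Prop := forall y, mu y <= nu y.
Definition finter {Y : Type} (mu nu : fset Y) : fset Y := fun y => Rmin (mu y) (nu y).
Definition fcompl {Y : Type} (mu : fset Y) : fset Y := fun y => 1 - mu y.
Definition fUnion {Y : Type} (mu nu : fset Y) : fset Y := fun y => Rmax (mu y) (nu y).
Definition foplus {Y : Type} (mu nu : fset Y) : fset Y := fun y => Rmin (mu y + nu y) 1.
Definition fminus {Y : Type} (mu nu : fset Y) : fset Y := fun y => Rmax (mu y - nu y) 0.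

(* the union (pointwise sup, with sup of empty = 0) of a family F of fuzzy sets *)
Definition is_union {Y : Type} (F : fset Y -> Prop) (nu : fset Y) : Prop :=
  forall y, is_lub (fun r => r = 0 \/ exists mu, F mu /\ r = mu y) (nu y).

(* fuzzy point y_t, t in (0,1] *)
Definition fpoint_ok (t : R) : Prop := 0 < t <= 1.
Definition qcoinc {Y : Type} (y : Y) (t : R) (mu : fset Y) : Prop := t + mu y > 1.

Record fuzzy_topology {Y : Type} (T : fset Y -> Prop) : Prop := {
  ft_fuzzy : forall mu, T mu -> is_fuzzy mu;
  ft_zero : T (fconst 0);
  ft_one : T (fconst 1);
  ft_inter : forall mu nu, T mu -> T nu -> T (finter mu nu);
  ft_union : forall F nu, (forall mu, F mu -> T mu) -> is_union F nu -> T nu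
}.

Record fuzzy_primal {Y : Type} (P : fset Y -> Prop) : Prop := {
  fp_fuzzy : forall mu, P mu -> is_fuzzy mu;
  fp_one : ~ P (fconst 1);
  fp_down : forall mu nu, P mu -> is_fuzzy nu -> fsub nu mu -> P nu;
  fp_inter : forall mu nu, is_fuzzy mu -> is_fuzzy nu ->
               P (finter mu nu) -> P mu \/ P nu
}.

Definition Qnbhd {Y : Type} (T : fset Y -> Prop) (y : Y) (t : R) (mu : fset Y) : Prop :=
  T mu /\ qcoinc y t mu.

Definition diamond_pt {Y : Type} (T P : fset Y -> Prop) (lam : fset Y) (y : Y) (t : R) : Prop :=
  fpoint_ok t /\
  forall mu, Qnbhd T y t mu -> P (foplus (fcompl lam) (fcompl mu)).

(* lambda^diamond as a fuzzy set: y |-> sup { t : y_t in lambda^diamond } (sup empty = 0) *)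
Definition is_diamond {Y : Type} (T P : fset Y -> Prop) (lam : fset Y) (d : fset Y) : Prop :=
  forall y, is_lub (fun r => r = 0 \/ diamond_pt T P lam y r) (d y).

Definition is_cl_diamond {Y : Type} (T P : fset Y -> Prop) (lam : fset Y) (c : fset Y) : Prop :=
  exists d, is_diamond T P lam d /\ c = fUnion lam d.

Definition T_diamond {Y : Type} (T P : fset Y -> Prop) (mu : fset Y) : Prop :=
  is_fuzzy mu /\ is_cl_diamond T P (fcompl mu) (fcompl mu).

Definition B_P {Y : Type} (T P : fset Y -> Prop) (beta : fset Y) : Prop :=
  exists mu lam, T mu /\ is_fuzzy lam /\ ~ P lam /\ beta = fminus mu (fcompl lam).

(* Main.v *)
Require Import Defs.
From Stdlib Require Import Reals Lra FunctionalExtensionality.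
Open Scope R_scope.

Ltac mm := unfold Rmax, Rmin in *; repeat (destruct Rle_dec); lra.

Lemma diam_bound {Y : Type} (T P : fset Y -> Prop) (lam : fset Y) (y : Y) :
  {m | is_lub (fun r => r = 0 \/ diamond_pt T P lam y r) m}.
Proof.
  apply completeness.
  - exists 1. intros r [->|[[_ H] _]]; lra.
  - exists 0; auto.
Qed.

Theorem theorem4p7 (Y : Type) (y0 : Y) (T P : fset Y -> Prop)
  (HT : fuzzy_topology T) (HP : fuzzy_primal P) :
  (forall beta, B_P T P beta -> T_diamond T P beta) /\
  (forall (y : Y) (t : R) (eta : fset Y),
     fpoint_ok t -> T_diamond T P eta -> qcoinc y t eta ->
     exists beta, B_P T P beta /\ qcoinc y t beta /\ fsub beta eta).
Proof.
  split.
  - intros beta (mu & lam & Tmu & Flam & NPlam & ->).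
    pose proof (ft_fuzzy _ HT mu Tmu) as Fmu.
    split.
    { intro y; specialize (Fmu y); specialize (Flam y); unfold fminus, fcompl; mm. }
    set (d := fun y => proj1_sig (diam_bound T P (fcompl (fminus mu (fcompl lam))) y)).
    exists d. split.
    { intro y. unfold d. exact (proj2_sig (diam_bound _ _ _ y)). }
    assert (Hd : forall y, d y <= fcompl (fminus mu (fcompl lam)) y).
    { intro y. unfold d. destruct (diam_bound T P (fcompl (fminus mu (fcompl lam))) y) as [m Hm0]; simpl; destruct Hm0 as [_ Hm].
      apply Hm. intros r [Hr0|[Hr Hn]].
      - subst r; pose proof (Fmu y); pose proof (Flam y); unfold fcompl, fminus; mm.
      - destruct (Rle_dec r (fcompl (fminus mu (fcompl lam)) y)) as [|Hgt]; auto; apply Rnot_le_lt in Hgt.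
        exfalso. apply NPlam.
        assert (Hqm : qcoinc y r mu).
        { unfold qcoinc, fcompl, fminus in *. pose proof (Fmu y); pose proof (Flam y). mm. }
        assert (HPm := Hn mu (conj Tmu Hqm)).
        apply (fp_down _ HP _ _ HPm Flam).
        intro z. pose proof (Fmu z); pose proof (Flam z).
        unfold foplus, fcompl, fminus; mm. }
    apply functional_extensionality; intro y. specialize (Hd y).
    unfold fUnion. mm.
  - intros y t eta Ht [Feta [d [Hd Heq]]] Hq.
    assert (Hdy : d y <= fcompl eta y).
    { assert (E := f_equal (fun f => f y) Heq). simpl in E. unfold fUnion in E.
      revert E; mm. }
    assert (Hnd : ~ diamond_pt T P (fcompl eta) y t).
    { intro H. destruct (Hd y) as [Hub _]. specialize (Hub t (or_intror H)).
      unfold qcoinc, fcompl in *; lra. }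
    assert (Hex : exists mu, Qnbhd T y t mu /\
               ~ P (foplus (fcompl (fcompl eta)) (fcompl mu))).
    { apply Classical_Prop.NNPP; intro Hc. apply Hnd. split; auto.
      intros mu Hmu. apply Classical_Prop.NNPP; intro Hc2. apply Hc. eauto. }
    destruct Hex as [mu [[Tmu Qmu] NP]].
    pose proof (ft_fuzzy _ HT mu Tmu) as Fmu.
    exists (fminus mu (fcompl (foplus (fcompl (fcompl eta)) (fcompl mu)))).
    split; [|split].
    + exists mu, (foplus (fcompl (fcompl eta)) (fcompl mu)). split; [auto|split; [|split; [auto|reflexivity]]].
      intro z; pose proof (Fmu z); pose proof (Feta z); unfold foplus, fcompl; mm.
    + pose proof (Fmu y); pose proof (Feta y); unfold qcoinc, fminus, foplus, fcompl in *. mm.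
    + intro z; pose proof (Fmu z); pose proof (Feta z); unfold fminus, foplus, fcompl; mm.
Qed.
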